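(* Let $(T,\sigma)$ be a confluent temperature-1 TAS with maximal producible assembly $\alpha_{\max}$, and let $x\in\mathrm{Dom}(\alpha_{\max})$. Let $p$ be a finite free path such that there is an assembly (not necessarily producible) whose binding graph contains the path $x.p$ and which places the tile $\alpha_{\max}(x)$ at $x$. If $\mathrm{Dom}(x.p)\subseteq \mathrm{NC}(x)$, then the path $x.p$ is a subgraph of the binding graph of $\alpha_{\max}$.
   Context: Directions $D=\{E=(1,0),N=(0,1),S=(0,-1),W=(-1,0)\}$; $\mathbb Z^2$ is the grid graph; a free path is a word over $D$ whose associated walk is simple; $A.m$ is the path starting at $A$ following $m$; $\vec m$ is the displacement (sum of letters) of finite $m$. A tile type is a map $t:D\to\Sigma$ ($\Sigma$ a finite glue set), $t_d$ its glue on side $d$. A temperature-1 TAS is $(T,\sigma)$, $T$ finite set of tile types, $\sigma$ the seed tile type. An assembly is a partial map $\alpha:\mathbb Z^2\to T\cup\{\sigma\}$; its binding graph has vertices $\mathrm{Dom}(\alpha)$ and an edge $\{v,v+d\}$ iff $\alpha(v)_d=\alpha(v+d)_{-d}$; it is stable if the binding graph is connected, producible if stable and $\alpha((0,0))=\sigma$. The TAS is confluent if any two producible assemblies agree on their common domain; then there is a unique producible assembly $\alpha_{\max}$ whose domain contains the domain of every producible assembly. Non-causal set: for $x\in\mathbb Z^2$, $\mathrm{NC}(x)=\{y\in\mathbb Z^2: \exists$ a finite free path $m$ with $(0,0).m$ a subgraph of the binding graph of $\alpha_{\max}$, $(0,0)+\vec m=x$ and $y\notin \mathrm{Dom}((0,0).m)\}\cup\{x\}$.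 *)

(* Defs.v *)
From Stdlib Require Import ZArith List.
Import ListNotations.
Open Scope Z_scope.

Inductive dir : Type := E | N | S | W.

Definition pos : Type := (Z * Z)%type.

Definition vec (d : dir) : pos :=
  match d with E => (1, 0) | N => (0, 1) | S => (0, -1) | W => (-1, 0) end.

Definition opp (d : dir) : dir :=
  match d with E => W | N => S | S => N | W => E end.

Definition shift (v : pos) (d : dir) : pos :=
  (fst v + fst (vec d), snd v + snd (vec d)).

Fixpoint walk (A : pos) (m : list dir) : list pos :=
  match m with
  | [] => [A]
  | d :: m' => A :: walk (shift A d) m'
  end.

Fixpoint endp (A : pos) (m : list dir) : pos :=
  match m with
  | [] => A
  | d :: m' => endp (shift A d) m'
  end.

(* free path: its walk is simple (translation invariant, test from origin) *)
Definition free (m : list dir) : Prop := NoDup (walk (0, 0) m).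

Definition tile (Sigma : Type) : Type := dir -> Sigma.

Definition assembly {Sigma : Type} (T : list (tile Sigma)) (sigma : tile Sigma)
  (a : pos -> option (tile Sigma)) : Prop :=
  forall v t, a v = Some t -> In t T \/ t = sigma.

Definition in_dom {Sigma : Type} (a : pos -> option (tile Sigma)) (v : pos) : Prop :=
  a v <> None.

(* edge {v, v+d} of the binding graph *)
Definition binds {Sigma : Type} (a : pos -> option (tile Sigma)) (v : pos) (d : dir) : Prop :=
  exists t t', a v = Some t /\ a (shift v d) = Some t' /\ t d = t' (opp d).

Fixpoint path_in {Sigma : Type} (a : pos -> option (tile Sigma)) (A : pos) (m : list dir) : Prop :=
  match m with
  | [] => in_dom a A
  | d :: m' => binds a A d /\ path_in a (shift A d) m'
  end.

Definition stable {Sigma : Type} (a : pos -> option (tile Sigma)) : Prop :=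
  forall u v, in_dom a u -> in_dom a v ->
    exists m, path_in a u m /\ endp u m = v.

Definition producible {Sigma : Type} (T : list (tile Sigma)) (sigma : tile Sigma)
  (a : pos -> option (tile Sigma)) : Prop :=
  assembly T sigma a /\ stable a /\ a (0, 0) = Some sigma.

Definition confluent {Sigma : Type} (T : list (tile Sigma)) (sigma : tile Sigma) : Prop :=
  forall a b, producible T sigma a -> producible T sigma b ->
    forall v, in_dom a v -> in_dom b v -> a v = b v.

Definition is_max_producible {Sigma : Type} (T : list (tile Sigma)) (sigma : tile Sigma)
  (amax : pos -> option (tile Sigma)) : Prop :=
  producible T sigma amax /\
  forall b, producible T sigma b -> forall v, in_dom b v -> in_dom amax v.

Definition NC {Sigma : Type} (amax : pos -> option (tile Sigma)) (x y : pos) : Prop :=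
  (exists m, free m /\ path_in amax (0, 0) m /\ endp (0, 0) m = x /\
             ~ In y (walk (0, 0) m))
  \/ y = x.

(* Main.v *)
From Pilot Require Import Defs.
From Stdlib Require Import ZArith List Lia FinFun.
Import ListNotations.
Import Pilot.Defs.

Definition pos_eq_dec (u v : pos) : {u = v} + {u <> v}.
Proof. decide equality; apply Z.eq_dec. Defined.

Lemma path_in_dom {Sigma} (a : pos -> option (tile Sigma)) u m :
  path_in a u m -> in_dom a u.
Proof.
  destruct m as [|d m]; simpl; auto.
  intros [[t [t' [H1 _]]] _]. unfold in_dom. congruence.
Qed.

Lemma path_app_iff {Sigma} (a : pos -> option (tile Sigma)) u q r :
  path_in a u (q ++ r) <-> path_in a u q /\ path_in a (endp u q) r.
Proof.
  revert u; induction q as [|d q IH]; intro u; simpl.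
  - split; [intro H; split; [eapply path_in_dom; eauto| auto] | tauto].
  - rewrite IH. tauto.
Qed.

Lemma endp_app u q r : endp u (q ++ r) = endp (endp u q) r.
Proof. revert u; induction q; simpl; auto. Qed.

Lemma walk_app u q r : walk u (q ++ r) = walk u q ++ tl (walk (endp u q) r).
Proof.
  revert u; induction q as [|d q IH]; intro u; simpl.
  - destruct r; reflexivity.
  - rewrite IH. reflexivity.
Qed.

Lemma shift_opp v d : shift (shift v d) (opp d) = v.
Proof. destruct v, d; unfold shift; simpl; f_equal; lia. Qed.

Lemma opp_opp d : opp (opp d) = d.
Proof. destruct d; reflexivity. Qed.

Lemma binds_rev {Sigma} (a : pos -> option (tile Sigma)) v d :
  binds a v d -> binds a (shift v d) (opp d).
Proof.
  intros [t [t' [H1 [H2 H3]]]]. exists t', t. rewrite shift_opp, opp_opp.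
  auto.
Qed.

Definition conn {Sigma} (a : pos -> option (tile Sigma)) u v :=
  exists m, path_in a u m /\ endp u m = v.

Lemma conn_trans {Sigma} (a : pos -> option (tile Sigma)) u v w :
  conn a u v -> conn a v w -> conn a u w.
Proof.
  intros [m1 [H1 E1]] [m2 [H2 E2]]. exists (m1 ++ m2).
  rewrite path_app_iff, endp_app, E1. auto.
Qed.

Lemma conn_sym {Sigma} (a : pos -> option (tile Sigma)) u v :
  conn a u v -> conn a v u.
Proof.
  intros [m [H E]]. subst v. revert u H; induction m as [|d m IH]; intros u H; simpl.
  - exists []. simpl. auto.
  - destruct H as [Hb Hp]. apply conn_trans with (shift u d); auto.
    exists [opp d]. simpl. rewrite shift_opp. split; auto.
    split; [apply binds_rev; auto|].
    destruct Hb as [t [t' [H1 _]]]. unfold in_dom; congruence.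
Qed.

Lemma conn_suffix {Sigma} (a : pos -> option (tile Sigma)) u m v :
  path_in a u m -> In v (walk u m) -> conn a v (endp u m).
Proof.
  revert u; induction m as [|d m IH]; intros u H Hin; simpl in *.
  - destruct Hin as [<-|[]]. exists []. simpl; auto.
  - destruct Hin as [<-|Hin].
    + exists (d :: m). simpl. auto.
    + apply IH; tauto.
Qed.

Lemma path_mono {Sigma} (a c : pos -> option (tile Sigma)) u m :
  path_in a u m -> (forall v, In v (walk u m) -> c v = a v) -> path_in c u m.
Proof.
  revert u; induction m as [|d m IH]; intros u H Hag; simpl in *.
  - unfold in_dom in *. rewrite Hag; auto.
  - destruct H as [[t [t' [H1 [H2 H3]]]] Hp]. split.
    + exists t, t'. rewrite Hag by auto. split; auto.
      rewrite Hag; [split; auto|]. right. destruct m; simpl; auto.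
    + apply IH; auto.
Qed.

Definition tr (w v : pos) : pos := (fst w + fst v, snd w + snd v)%Z.

Lemma walk_tr w u m : walk (tr w u) m = map (tr w) (walk u m).
Proof.
  revert u; induction m as [|d m IH]; intro u; simpl; auto.
  f_equal. rewrite <- IH. f_equal. destruct w, u, d; unfold tr, shift; simpl; f_equal; lia.
Qed.

Lemma free_walk x p : free p -> NoDup (walk x p).
Proof.
  intro H. replace x with (tr x (0,0)%Z).
  - rewrite walk_tr. apply FinFun.Injective_map_NoDup; auto.
    intros [a b] [c d] E. unfold tr in E; simpl in E. injection E; intros.
    f_equal; lia.
  - destruct x; unfold tr; simpl; f_equal; lia.
Qed.

Theorem mainTheorem3 (Sigma : Type) (Sigma_finite : exists l : list Sigma, forall g, In g l)
  (T : list (tile Sigma)) (sigma : tile Sigma)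
  (amax : pos -> option (tile Sigma)) :
  confluent T sigma ->
  is_max_producible T sigma amax ->
  forall (x : pos), in_dom amax x ->
  forall (p : list dir), free p ->
  forall (b : pos -> option (tile Sigma)),
    assembly T sigma b -> path_in b x p -> b x = amax x ->
  (forall y, In y (walk x p) -> NC amax x y) ->
  path_in amax x p.
Proof.
  intros Hconf [Hprod Hmax] x Hx p Hfree b Hb Hpb Hbx HNC.
  destruct Hprod as [Hasm [Hstab H00]].
  assert (Hnd := free_walk x p Hfree).
  assert (Main : forall q r, q ++ r = p ->
     path_in amax x q /\ forall v, In v (walk x q) -> amax v = b v).
  { intros q; induction q as [|d q IH] using rev_ind; intros r Hqr.
    - simpl. split; auto. intros v [<-|[]]. auto.
    - rewrite <- app_assoc in Hqr. simpl in Hqr.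
      destruct (IH _ Hqr) as [Hpq Hagq].
      set (y := endp x q) in *. set (z := shift y d).
      subst p.
      rewrite path_app_iff in Hpb. destruct Hpb as [_ Hpb]. fold y in Hpb.
      simpl in Hpb. destruct Hpb as [Hbyd Hpr].
      rewrite walk_app in Hnd, HNC. fold y in Hnd, HNC. simpl in Hnd, HNC.
      assert (Hzin : In z (walk z r)) by (destruct r; simpl; auto).
      assert (Hxq : In x (walk x q)) by (destruct q; simpl; auto).
      assert (Hyq : In y (walk x q)).
      { unfold y. clear. revert x; induction q; simpl; auto. }
      assert (Hznq : ~ In z (walk x q)).
      { intro Hin. clear -Hnd Hin Hzin.
        revert Hnd Hin. induction (walk x q) as [|a l IHl]; simpl; auto.
        intros Hnd [Ea|Hin].
        - apply NoDup_cons_iff in Hnd. destruct Hnd as [H _]. apply H.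
          apply in_or_app; right. rewrite Ea; exact Hzin.
        - apply IHl; auto. inversion Hnd; auto. }
      assert (Hzx : z <> x) by (intro E; rewrite E in Hznq; auto).
      destruct (HNC z (in_or_app _ _ _ (or_intror Hzin))) as [[m [Hfm [Hpm [Hem Hnm]]]]|E];
        [|contradiction].
      set (c := fun v => if in_dec pos_eq_dec v (walk (0,0)%Z m ++ walk x q) then amax v
                         else if pos_eq_dec v z then b v else None).
      assert (Hcin : forall v, In v (walk (0,0)%Z m ++ walk x q) -> c v = amax v).
      { intros v Hv. unfold c. destruct in_dec; tauto. }
      assert (Hcz : c z = b z).
      { unfold c. destruct in_dec as [Hi|_].
        - exfalso. apply in_app_or in Hi; tauto.
        - destruct pos_eq_dec; congruence. }
      assert (Hpcm : path_in c (0,0)%Z m).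
      { apply (path_mono amax); auto. intros; apply Hcin, in_or_app; auto. }
      assert (Hpcq : path_in c x q).
      { apply (path_mono amax); auto. intros; apply Hcin, in_or_app; auto. }
      assert (Hbind : binds c y d).
      { destruct Hbyd as [t [t' [H1 [H2 H3]]]]. exists t, t'.
        rewrite Hcin by (apply in_or_app; auto). rewrite Hagq by auto.
        fold z in H2 |- *. rewrite Hcz. auto. }
      assert (Hdomc : forall v, in_dom c v -> conn c v x).
      { intros v Hv. unfold in_dom, c in Hv.
        destruct (in_dec pos_eq_dec v (walk (0,0)%Z m ++ walk x q)) as [Hi|Hni].
        - apply in_app_or in Hi. destruct Hi as [Hi|Hi].
          + rewrite <- Hem. eapply conn_suffix; eauto.
          + apply conn_trans with y; [eapply conn_suffix; eauto|].
            apply conn_sym. exists q; auto.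
        - destruct (pos_eq_dec v z) as [->|]; [|congruence].
          apply conn_trans with y.
          + apply conn_sym. exists [d]. simpl. split; auto. split; auto.
            fold z. unfold in_dom. rewrite Hcz. simpl in Hv. exact Hv.
          + apply conn_sym. exists q; auto. }
      assert (Hprodc : producible T sigma c).
      { split; [|split].
        - intros v t Hv. unfold c in Hv.
          destruct in_dec; [eapply Hasm; eauto|].
          destruct pos_eq_dec; [eapply Hb; eauto|discriminate].
        - intros u v Hu Hv. apply conn_trans with x; auto. apply conn_sym; auto.
        - rewrite Hcin; auto. apply in_or_app; left. destruct m; simpl; auto. }
      assert (Hzdom : in_dom c z).
      { unfold in_dom. rewrite Hcz. destruct Hbyd as [t [t' [_ [H2 _]]]].
        fold z in H2. congruence. }
      assert (Hza : amax z = b z).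
      { rewrite <- Hcz. symmetry. apply (Hconf c amax); auto.
        - split; auto.
        - eapply Hmax; eauto. }
      split.
      + apply path_app_iff. split; auto. fold y. simpl. fold z.
        split.
        * destruct Hbyd as [t [t' [H1 [H2 H3]]]]. exists t, t'.
          rewrite Hagq by auto. fold z. rewrite Hza. auto.
        * unfold in_dom. rewrite Hza. destruct Hbyd as [t [t' [_ [H2 _]]]].
          fold z in H2. congruence.
      + intros v Hv. rewrite walk_app in Hv. fold y in Hv. simpl in Hv.
        apply in_app_or in Hv. destruct Hv as [Hv|[<-|[]]]; auto. }
  destruct (Main p [] (app_nil_r p)); auto.
Qed.
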